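(* Let $G>0$, $T>0$, let $F\colon\mathbb R\to\mathbb R$ be continuous and $T$-periodic, and let $a\in(0,1)$ be such that $\mathbb R\times\Gamma_a$ is a bound set for $v_\lambda$ for every $\lambda\in[0,1]$. Then there exists $b>0$ such that $\mathbb R\times(\Gamma_a\cap\Delta_b)$ is a bound set for $v_\lambda$ for all $\lambda\in[0,1]$.
   Context: For $\lambda\in[0,1]$ consider on $\mathbb R\times\Omega$, $\Omega=(-1,1)\times\mathbb R$, the system $\dot t=1$, $\dot x=p$, $\dot p=\big(G\sqrt{1-x^2}-\frac{p^2}{1-x^2}\big)x-\lambda(1-x^2)F(t)$, with right-hand side $v_\lambda(t,x,p)$ and local flow $\phi^\lambda$ (solutions are unique). For $0<a<1$ and $b>0$, $\Gamma_a=\{(x,p)\in\mathbb R^2:|x|\le a\}$ and $\Delta_b=\{(x,p)\in\mathbb R^2:|x|<1,\ b|x|+|p|\le b\}$. A closed set $E\subset\mathbb R\times\Omega$ is a bound set for $v_\lambda$ if for every $\epsilon>0$ there is no point $z\in\partial E$ with $\phi^\lambda_s(z)\in E$ for all $s\in(-\epsilon,\epsilon)$. *)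

(* Defs.v *)
From Stdlib Require Import Reals.
From Coquelicot Require Import Coquelicot.
Open Scope R_scope.

Definition pt := (R * R * R)%type.
Definition pt_t (z : pt) : R := fst (fst z).
Definition pt_x (z : pt) : R := snd (fst z).
Definition pt_p (z : pt) : R := snd z.

(* The phase space R x Omega, Omega = (-1,1) x R. *)
Definition inD (z : pt) : Prop := -1 < pt_x z < 1.

(* Max-norm distance on R^3 (induces the usual topology). *)
Definition dist3 (z w : pt) : R :=
  Rmax (Rabs (pt_t z - pt_t w)) (Rmax (Rabs (pt_x z - pt_x w)) (Rabs (pt_p z - pt_p w))).

(* Third component of v_lambda (first two are 1 and p). *)
Definition vp (G : R) (F : R -> R) (lam t x p : R) : R :=
  (G * sqrt (1 - x ^ 2) - p ^ 2 / (1 - x ^ 2)) * x - lam * (1 - x ^ 2) * F t.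

Definition is_solution (G : R) (F : R -> R) (lam eps : R) (u : R -> pt) : Prop :=
  forall s, -eps < s < eps ->
    inD (u s) /\
    is_derive (fun r => pt_t (u r)) s 1 /\
    is_derive (fun r => pt_x (u r)) s (pt_p (u s)) /\
    is_derive (fun r => pt_p (u r)) s (vp G F lam (pt_t (u s)) (pt_x (u s)) (pt_p (u s))).

(* Closedness and boundary relative to the ambient space R x Omega. *)
Definition rel_closed (E : pt -> Prop) : Prop :=
  (forall z, E z -> inD z) /\
  (forall z, inD z -> (forall r, 0 < r -> exists w, E w /\ dist3 w z < r) -> E z).

Definition rel_boundary (E : pt -> Prop) (z : pt) : Prop :=
  inD z /\
  forall r, 0 < r ->
    (exists w, E w /\ dist3 w z < r) /\ (exists w, inD w /\ ~ E w /\ dist3 w z < r).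

(* By uniqueness of solutions, "phi_s(z) defined and in E on (-eps,eps)" means
   exactly: there is a solution u on (-eps,eps) with u 0 = z and u s in E. *)
Definition bound_set (G : R) (F : R -> R) (lam : R) (E : pt -> Prop) : Prop :=
  rel_closed E /\
  forall eps, 0 < eps ->
    ~ exists z u, rel_boundary E z /\ is_solution G F lam eps u /\ u 0 = z /\
                  (forall s, -eps < s < eps -> E (u s)).

Definition Gamma_set (a : R) (x p : R) : Prop := Rabs x <= a.
Definition Delta_set (b : R) (x p : R) : Prop := Rabs x < 1 /\ b * Rabs x + Rabs p <= b.

Definition cyl (S : R -> R -> Prop) (z : pt) : Prop := S (pt_x z) (pt_p z).

(* Main.v *)
Require Import Defs.
From Stdlib Require Import Reals Lra.
From Coquelicot Require Import Coquelicot.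
Open Scope R_scope.

Lemma F_bounded (T : R) (F : R -> R) :
  0 < T -> (forall t, continuous F t) -> (forall t, F (t + T) = F t) ->
  exists M, 0 <= M /\ forall t, Rabs (F t) <= M.
Proof.
  intros HT Hc Hp.
  assert (Hc' : forall c, 0 <= c <= T -> continuity_pt (fun t => Rabs (F t)) c).
  { intros c _. apply (continuity_pt_comp F Rabs c).
    - apply continuity_pt_filterlim. apply Hc.
    - apply Rcontinuity_abs. }
  destruct (continuity_ab_maj _ 0 T (Rlt_le _ _ HT) Hc') as [Mx [HM _]].
  set (M := Rabs (F Mx)).
  exists M. split. apply Rabs_pos.
  assert (Hpos : forall n : nat, forall t, 0 <= t <= INR n * T -> Rabs (F t) <= M).
  { induction n; intros t Ht.
    - simpl in Ht. apply HM. lra.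
    - destruct (Rle_dec t T) as [h|h]. apply HM. lra.
      replace t with ((t - T) + T) by ring. rewrite Hp. apply IHn.
      rewrite S_INR in Ht. lra. }
  assert (Hneg : forall n : nat, forall t, - (INR n * T) <= t <= 0 -> Rabs (F t) <= M).
  { induction n; intros t Ht.
    - simpl in Ht. apply HM. lra.
    - rewrite <- Hp. destruct (Rle_dec (-T) t) as [h|h]. apply HM. lra.
      apply IHn. rewrite S_INR in Ht. lra. }
  intro t. destruct (INR_archimed T (Rabs t) HT) as [n Hn].
  destruct (Rle_dec 0 t) as [h|h].
  - apply (Hpos n). rewrite Rabs_right in Hn; lra.
  - apply (Hneg n). rewrite Rabs_left in Hn; lra.
Qed.

Lemma sq1 (e : R) : e * e = 1 -> e = 1 \/ e = -1.
Proof. intro H. assert ((e - 1) * (e + 1) = 0) by nra.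
  destruct (Rmult_integral _ _ H0); [left|right]; lra. Qed.

Lemma key (b a M G lam Ft X P e1 e2 S x0 p0 : R) :
  0 <= X <= a -> a < 1 -> P = b * (1 - X) -> 1 <= b -> M + 1 <= b * (1 - a) / 2 ->
  0 <= lam <= 1 -> Rabs Ft <= M -> 0 <= S -> 0 < G ->
  e1 * e1 = 1 -> e2 * e2 = 1 -> x0 = e1 * X -> p0 = e2 * P ->
  b * e1 * p0 + e2 * ((G * S - p0 ^ 2 / (1 - x0 ^ 2)) * x0 - lam * (1 - x0 ^ 2) * Ft) <> 0.
Proof.
  intros HX Ha HP Hb HM Hl HF HS HG H1 H2 Hx0 Hp0.
  assert (Ex : x0 ^ 2 = X ^ 2) by (rewrite Hx0; destruct (sq1 e1 H1) as [-> | ->]; ring).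
  assert (Ep : p0 ^ 2 = P ^ 2) by (rewrite Hp0; destruct (sq1 e2 H2) as [-> | ->]; ring).
  rewrite Ex, Ep. subst x0 p0. intro Heq.
  assert (HQ : P ^ 2 / (1 - X ^ 2) = b * b * (1 - X) / (1 + X)).
  { rewrite HP. field. split; nra. }
  rewrite HQ in Heq.
  assert (E : e1 * e2 * (b * e1 * (e2 * P) + e2 * ((G * S - b * b * (1 - X) / (1 + X)) * (e1 * X) - lam * (1 - X ^ 2) * Ft))
     = b * b * (1 - X) / (1 + X) + G * S * X - e1 * lam * (1 - X ^ 2) * Ft).
  { assert (e1 = 1 \/ e1 = -1) as [-> | ->] by nra;
    assert (e2 = 1 \/ e2 = -1) as [-> | ->] by nra; rewrite HP; field; lra. }
  rewrite Heq, Rmult_0_r in E.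
  assert (Hq : b * b * (1 - X) / (1 + X) >= b * b * (1 - a) / 2).
  { apply Rle_ge. unfold Rdiv. apply Rle_trans with (b * b * (1 - X) * / 2).
    - apply Rmult_le_compat_r; nra.
    - apply Rmult_le_compat_l. nra. apply Rinv_le_contravar; lra. }
  assert (He1 : Rabs e1 = 1).
  { destruct (sq1 e1 H1) as [->| ->]; unfold Rabs; destruct Rcase_abs; lra. }
  assert (Ht : Rabs (e1 * lam * (1 - X ^ 2) * Ft) <= M).
  { rewrite !Rabs_mult, He1. rewrite (Rabs_right lam) by lra.
    rewrite (Rabs_right (1 - X^2)) by nra.
    assert (0 <= 1 - X^2 <= 1) by nra.
    assert (0 <= Rabs Ft) by apply Rabs_pos.
    assert (0 <= lam * (1 - X^2) <= 1) by (split; nra).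
    apply Rle_trans with (1 * Rabs Ft); [|lra].
    rewrite Rmult_1_l. replace (1 * lam * (1 - X ^ 2) * Rabs Ft) with ((lam * (1 - X ^ 2)) * Rabs Ft) by ring.
    apply Rmult_le_compat_r; lra. }
  assert (HGS : 0 <= G * S * X) by (apply Rmult_le_pos; nra).
  assert (e1 * lam * (1 - X ^ 2) * Ft <= M) by (eapply Rle_trans; [apply Rle_abs|exact Ht]).
  assert (b * b * (1 - a) / 2 >= b * (1 - a) / 2).
  { apply Rle_ge. unfold Rdiv. apply Rmult_le_compat_r. lra.
    replace (b * b * (1 - a)) with (b * (b * (1 - a))) by ring.
    rewrite <- (Rmult_1_l (b * (1-a))) at 1. apply Rmult_le_compat_r; nra. }
  lra.
Qed.
Lemma dist_x (w z : pt) r : dist3 w z < r -> Rabs (pt_x w - pt_x z) < r.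
Proof. unfold dist3. intro H. eapply Rle_lt_trans; [|exact H].
  eapply Rle_trans; [|apply Rmax_r]. apply Rmax_l. Qed.
Lemma dist_p (w z : pt) r : dist3 w z < r -> Rabs (pt_p w - pt_p z) < r.
Proof. unfold dist3. intro H. eapply Rle_lt_trans; [|exact H].
  eapply Rle_trans; [|apply Rmax_r]. apply Rmax_r. Qed.
Lemma abs_close y x r : Rabs (y - x) < r -> Rabs x <= Rabs y + r /\ Rabs y <= Rabs x + r.
Proof. unfold Rabs; repeat destruct Rcase_abs; intros; lra. Qed.
Lemma le_lim y c : (forall r, 0 < r -> y <= c + r) -> y <= c.
Proof. intro H. destruct (Rle_dec y c) as [h|h]; [exact h|].
  specialize (H ((y - c)/2)). lra. Qed.

Theorem lemma3p2 (G T : R) (F : R -> R) (a : R) :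
  0 < G -> 0 < T ->
  (forall t, continuous F t) ->
  (forall t, F (t + T) = F t) ->
  0 < a < 1 ->
  (forall lam, 0 <= lam <= 1 -> bound_set G F lam (cyl (Gamma_set a))) ->
  exists b, 0 < b /\
    forall lam, 0 <= lam <= 1 ->
      bound_set G F lam (cyl (fun x p => Gamma_set a x p /\ Delta_set b x p)).
Proof.
  intros HG HT Hc Hper Ha Hbs.
  destruct (F_bounded T F HT Hc Hper) as [M [HM0 HM]].
  set (b := 1 + 2 * (M + 1) / (1 - a)).
  assert (Hb1 : 1 <= b).
  { unfold b. assert (0 <= 2 * (M + 1) / (1 - a)). { apply Rmult_le_pos. lra. left; apply Rinv_0_lt_compat; lra. } lra. }
  assert (HbM : M + 1 <= b * (1 - a) / 2).
  { unfold b. field_simplify; [|lra]. lra. }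
  exists b. split; [lra|].
  intros lam Hlam. destruct (Hbs lam Hlam) as [_ HGb].
  unfold cyl, Gamma_set, Delta_set.
  split.
  - split.
    + intros z [Hz1 Hz2]. unfold inD. unfold Rabs in Hz1; destruct Rcase_abs; lra.
    + intros z _ Hcl.
      assert (HX : Rabs (pt_x z) <= a).
      { apply le_lim. intros r Hr. destruct (Hcl r Hr) as [w [[Hw1 _] Hd]].
        apply dist_x, abs_close in Hd. lra. }
      split; [exact HX|]. split; [lra|].
      assert (H : b * Rabs (pt_x z) + Rabs (pt_p z) <= b + 0).
      { apply le_lim. intros r Hr. destruct (Hcl (r / (b + 1))) as [w [[_ [_ Hw]] Hd]].
        { apply Rdiv_lt_0_compat; lra. }
        pose proof (abs_close _ _ _ (dist_x _ _ _ Hd)) as [A1 _].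
        pose proof (abs_close _ _ _ (dist_p _ _ _ Hd)) as [A2 _].
        assert (b * (r / (b + 1)) + r / (b + 1) = r) by (field; lra). nra. }
      lra.
  - intros eps Heps [z [u [Hbd [Hsol [Hu0 Hin]]]]].
    assert (HE0 : Rabs (pt_x z) <= a /\ Rabs (pt_x z) < 1 /\ b * Rabs (pt_x z) + Rabs (pt_p z) <= b).
    { rewrite <- Hu0. destruct (Hin 0) as [h1 [h2 h3]]; [lra|]. auto. }
    destruct HE0 as [HXa [_ HD]].
    destruct (Rle_lt_or_eq_dec _ _ HXa) as [HXlt | HXeq].
    + (* interior in x: on Delta boundary *)
      assert (HDeq : b * Rabs (pt_x z) + Rabs (pt_p z) = b).
      { destruct (Rle_lt_or_eq_dec _ _ HD) as [Hlt|]; [|assumption]. exfalso.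
        destruct Hbd as [_ Hbd].
        set (r := Rmin (a - Rabs (pt_x z)) ((b - (b * Rabs (pt_x z) + Rabs (pt_p z))) / (b + 1))).
        assert (Hr1 : r <= a - Rabs (pt_x z)) by apply Rmin_l.
        assert (Hr2 : r <= (b - (b * Rabs (pt_x z) + Rabs (pt_p z))) / (b + 1)) by apply Rmin_r.
        assert (Hr : 0 < r).
        { apply Rmin_pos. lra. apply Rdiv_lt_0_compat; lra. }
        destruct (Hbd r Hr) as [_ [w [_ [Hw Hd]]]]. apply Hw.
        pose proof (abs_close _ _ _ (dist_x _ _ _ Hd)) as [_ A1].
        pose proof (abs_close _ _ _ (dist_p _ _ _ Hd)) as [_ A2].
        assert (r * (b + 1) <= b - (b * Rabs (pt_x z) + Rabs (pt_p z))).
        { apply Rmult_le_reg_r with (/ (b + 1)). apply Rinv_0_lt_compat; lra.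
          rewrite Rmult_assoc, Rinv_r by lra. lra. }
        split; [lra|]. split; [lra|]. nra. }
      set (x0 := pt_x z) in *. set (p0 := pt_p z) in *. set (t0 := pt_t z) in *.
      set (e1 := if Rle_dec 0 x0 then 1 else -1).
      set (e2 := if Rle_dec 0 p0 then 1 else -1).
      assert (He1 : e1 * e1 = 1) by (unfold e1; destruct (Rle_dec 0 x0); ring).
      assert (He2 : e2 * e2 = 1) by (unfold e2; destruct (Rle_dec 0 p0); ring).
      assert (He1x : e1 * x0 = Rabs x0).
      { unfold e1; destruct (Rle_dec 0 x0). rewrite Rabs_right; lra. rewrite Rabs_left; lra. }
      assert (He2p : e2 * p0 = Rabs p0).
      { unfold e2; destruct (Rle_dec 0 p0). rewrite Rabs_right; lra. rewrite Rabs_left; lra. }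
      assert (He1le : forall y, e1 * y <= Rabs y).
      { intro y. unfold e1; destruct (Rle_dec 0 x0); unfold Rabs; destruct Rcase_abs; lra. }
      assert (He2le : forall y, e2 * y <= Rabs y).
      { intro y. unfold e2; destruct (Rle_dec 0 p0); unfold Rabs; destruct Rcase_abs; lra. }
      set (g := fun s => b * e1 * pt_x (u s) + e2 * pt_p (u s)).
      destruct (Hsol 0) as [_ [_ [Hdx Hdp]]]; [lra|].
      rewrite Hu0 in Hdx, Hdp. fold x0 p0 t0 in Hdx, Hdp.
      set (L := b * e1 * p0 + e2 * vp G F lam t0 x0 p0).
      assert (Hd : is_derive g 0 L).
      { unfold g, L.
        apply (is_derive_plus (fun r => b * e1 * pt_x (u r)) (fun r => e2 * pt_p (u r))).
        - apply is_derive_scal. exact Hdx.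
        - apply is_derive_scal. exact Hdp. }
      apply is_derive_Reals in Hd.
      assert (HL : L = 0).
      { change L with (derive_pt g 0 (exist _ L Hd)).
        apply (deriv_maximum g (-eps) eps 0); try lra.
        intros s Hs1 Hs2. unfold g. rewrite Hu0. fold x0 p0.
        destruct (Hin s) as [_ [_ Hs]]; [lra|].
        pose proof (He1le (pt_x (u s))). pose proof (He2le (pt_p (u s))).
        assert (b * e1 * x0 + e2 * p0 = b) by (rewrite Rmult_assoc, He1x, He2p; lra).
        assert (b * (e1 * pt_x (u s)) <= b * Rabs (pt_x (u s))) by (apply Rmult_le_compat_l; lra).
        lra. }
      revert HL. unfold L, vp.
      apply (key b a M G lam (F t0) (Rabs x0) (Rabs p0) e1 e2 (sqrt (1 - x0 ^ 2))).
      split; [apply Rabs_pos|lra]. lra. lra. lra. exact HbM. exact Hlam. apply HM.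
      apply sqrt_pos. exact HG. exact He1. exact He2.
      rewrite <- He1x, <- Rmult_assoc, He1; ring.
      rewrite <- He2p, <- Rmult_assoc, He2; ring.
    + (* on Gamma boundary *)
      apply (HGb eps Heps). exists z, u. split; [|split; [exact Hsol|split; [exact Hu0|]]].
      * split; [apply Hbd|]. intros r Hr. split.
        { exists z. split; [unfold cyl, Gamma_set; lra|]. unfold dist3. rewrite !Rminus_diag, Rabs_R0. repeat apply Rmax_lub_lt; lra. }
        set (d := Rmin (r / 2) ((1 - a) / 2)).
        assert (Hd1 : d <= r / 2) by apply Rmin_l.
        assert (Hd2 : d <= (1 - a) / 2) by apply Rmin_r.
        assert (Hd : 0 < d) by (apply Rmin_pos; lra).
        destruct (Rle_dec 0 (pt_x z)) as [hx|hx].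
        { exists (pt_t z, pt_x z + d, pt_p z).
          rewrite Rabs_right in HXeq by lra.
          unfold cyl, Gamma_set, inD, dist3, pt_t, pt_x, pt_p in *; simpl.
          rewrite Rabs_right by lra. split; [lra|]. split; [lra|].
          replace (fst (fst z) - fst (fst z)) with 0 by ring.
          replace (snd z - snd z) with 0 by ring.
          replace (snd (fst z) + d - snd (fst z)) with d by ring.
          rewrite Rabs_R0, (Rabs_right d) by lra.
          repeat apply Rmax_lub_lt; lra. }
        { exists (pt_t z, pt_x z - d, pt_p z).
          rewrite Rabs_left in HXeq by lra.
          unfold cyl, Gamma_set, inD, dist3, pt_t, pt_x, pt_p in *; simpl.
          rewrite Rabs_left by lra. split; [lra|]. split; [lra|].
          replace (fst (fst z) - fst (fst z)) with 0 by ring.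
          replace (snd z - snd z) with 0 by ring.
          replace (snd (fst z) - d - snd (fst z)) with (-d) by ring.
          rewrite Rabs_R0, Rabs_Ropp, (Rabs_right d) by lra.
          repeat apply Rmax_lub_lt; lra. }
      * intros s Hs. unfold cyl, Gamma_set. apply Hin; auto.
Qed.
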